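(* Let $\theta\in(0,1)$ and $\delta>0$ with $\theta+\delta<1$, and for $\lambda>0$ set $\varphi_0(x)=e^{\lambda(x-\theta)^2}$. For a sufficiently large fixed constant $\lambda>0$, there exist constants $s_0>0$ and $C>0$ such that $$s\int_{\theta+\delta}^1|f(x)|^2e^{2s\varphi_0(x)}\,dx\le C\int_{\theta+\delta}^1|f'(x)|^2e^{2s\varphi_0(x)}\,dx$$ for all $s\ge s_0$ and all $f\in H^1(\theta+\delta,1)$ with $f(1)=0$. *)

(* Defs.v *)
From mathcomp Require Import all_boot all_order all_algebra.
From mathcomp Require Import all_classical all_reals all_analysis.
Set Implicit Arguments. Unset Strict Implicit. Unset Printing Implicit Defensive.
Import Order.TTheory GRing.Theory Num.Theory.
Local Open Scope classical_set_scope.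
Local Open Scope ring_scope.

(* [H1_deriv a b f g] : f (restricted to [a,b]) belongs to H^1(a,b), f being
   its (absolutely) continuous representative, and g is its weak derivative:
   g is measurable, g and g^2 are Lebesgue integrable on [a,b], and
   f x = f a + \int_a^x g for every x in [a,b]. *)
Definition H1_deriv (R : realType) (a b : R) (f g : R -> R) : Prop :=
  [/\ measurable_fun `[a, b] g,
      (@lebesgue_measure R).-integrable `[a, b] (fun x => (g x)%:E),
      (@lebesgue_measure R).-integrable `[a, b] (fun x => (g x ^+ 2)%:E) &
      forall x, a <= x <= b ->
        f x = f a + Rintegral (@lebesgue_measure R) `[a, x] g].

Definition phi0 (R : realType) (lambda theta : R) (x : R) : R :=
  expR (lambda * (x - theta) ^+ 2).

(* Main.v *)
Require Import Defs.
From mathcomp Require Import all_boot all_order all_algebra.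
From mathcomp Require Import all_classical all_reals all_analysis.
From mathcomp Require Import ring lra.
From mathcomp Require Import measurable_realfun.
Import Order.TTheory GRing.Theory Num.Theory.
Import numFieldTopology.Exports.
Local Open Scope classical_set_scope.
Local Open Scope ring_scope.

Lemma phi0_incr (R : realType) (lambda theta delta x y : R) :
  0 < lambda -> 0 < delta -> theta + delta <= x -> x <= y ->
  2 * lambda * delta * (y - x) <= phi0 lambda theta y - phi0 lambda theta x.
Proof.
move=> l0 d0 ax xy; rewrite /phi0.
have [u ud] : {u | u = lambda * (y - theta) ^+ 2} by eexists.
have [v vd] : {v | v = lambda * (x - theta) ^+ 2} by eexists.
rewrite -ud -vd.
have v0 : 0 <= v by rewrite vd; apply: mulr_ge0; [exact: ltW | exact: sqr_ge0].
have uv : 2 * lambda * delta * (y - x) <= u - v.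
  rewrite ud vd.
  have h1 : 0 <= y - x by lra.
  have h2 : 2 * delta <= y + x - 2 * theta by lra.
  have -> : lambda * (y - theta) ^+ 2 - lambda * (x - theta) ^+ 2 =
     lambda * (y - x) * (y + x - 2 * theta) by ring.
  have -> : 2 * lambda * delta * (y - x) = lambda * (y - x) * (2 * delta) by ring.
  by apply: ler_wpM2l => //; apply: mulr_ge0; lra.
have e1 : 1 <= expR v by apply: le_trans (expR_ge1Dx v); lra.
have e2 : 1 + (u - v) <= expR (u - v) by exact: expR_ge1Dx.
have -> : expR u = expR v * expR (u - v) by rewrite -expRD; congr expR; ring.
have uv0 : 0 <= u - v.
  apply: le_trans uv; apply: mulr_ge0; [apply: mulr_ge0; lra | lra].
nra.
Qed.

Lemma amgm (R : realType) (e t y : R) : 0 < e -> 0 < t ->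
  `|y| <= e / 2 * (y ^+ 2 * t) + 1 / (2 * e) * t^-1.
Proof.
move=> e0 t0.
set z := `|y|.
have -> : y ^+ 2 = z ^+ 2 by rewrite /z real_normK // num_real.
have z0 : 0 <= z by exact: normr_ge0.
have et : 0 < e * t by exact: mulr_gt0.
have -> : e / 2 * (z ^+ 2 * t) + 1 / (2 * e) * t^-1 =
   z + (e * t * z - 1) ^+ 2 / (2 * (e * t)).
  field; apply/andP; split; rewrite ?mulf_neq0 ?gt_eqF //.
rewrite lerDl; apply: divr_ge0; [exact: sqr_ge0 | lra].
Qed.

Lemma cs_real (R : realType) (u J M : R) : 0 <= u -> 0 <= J -> 0 < M ->
  (forall e, 0 < e -> u <= e / 2 * J + 1 / (2 * e) * M) -> u ^+ 2 <= J * M.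
Proof.
move=> u0 J0 M0 H.
have [->|up] := eqVneq u 0; first by rewrite expr0n /=; apply: mulr_ge0; lra.
have u0' : 0 < u by rewrite lt_neqAle eq_sym up u0.
have := H (M / u) (divr_gt0 M0 u0').
have -> : M / u / 2 * J + 1 / (2 * (M / u)) * M = (M * J / u + u) / 2.
  by field; apply/andP; split; rewrite gt_eqF.
move=> h.
have h2 : u <= M * J / u by lra.
have := ler_wpM2r (ltW u0') h2.
rewrite divfK ?gt_eqF // => h3.
by rewrite expr2 (mulrC J).
Qed.

Lemma measurable_w (R : realType) (lambda theta c : R) :
  measurable_fun [set: R] (fun y => expR (c * phi0 lambda theta y)).
Proof.
apply: measurableT_comp; first exact: measurable_realfun.measurable_expR.
apply: measurable_realfun.measurable_funM => //.
apply: measurableT_comp; first exact: measurable_realfun.measurable_expR.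
apply: measurable_realfun.measurable_funM => //.
apply: measurable_realfun.measurable_funX.
exact: measurable_realfun.measurable_funB.
Qed.

Local Open Scope ereal_scope.
Lemma Bbound (R : realType) (lambda theta delta s x : R) :
  (0 < lambda)%R -> (0 < delta)%R -> (0 < s)%R -> (0 < theta)%R ->
  (theta + delta <= x)%R -> (x <= 1)%R ->
  \int[@lebesgue_measure R]_(y in `]x, 1%R]) (expR (- 2 * s * phi0 lambda theta y))%R%:E
   <= (expR (- 2 * s * phi0 lambda theta x) / (2 * s * (2 * lambda * delta)))%R%:E.
Proof.
move=> l0 d0 s0 th0 ax x1.
set k := (2 * s * (2 * lambda * delta))%R.
have k0 : (0 < k)%R by rewrite /k; apply: mulr_gt0; apply: mulr_gt0 => //; apply: mulr_gt0.
have x0 : (0 < x)%R by lra.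
have mF : measurable_fun setT (fun y => expR (- 2 * s * phi0 lambda theta y)).
  exact: (@measurable_w R lambda theta (- 2 * s)%R).
have [->|x1'] := eqVneq x 1%R.
  rewrite set_itv_ge ?bnd_simp ?ltxx // integral_set0 lee_fin.
  by apply: divr_ge0; [exact: expR_ge0 | exact: ltW].
have xlt : (x < 1)%R by rewrite lt_neqAle x1' x1.
set c0 := (expR (- 2 * s * phi0 lambda theta x) * expR (k * x) / k)%R.
apply: (@le_trans _ _ (\int[lebesgue_measure]_(y in `[x, 1%R]) (expR (- 2 * s * phi0 lambda theta y))%R%:E)).
  apply: ge0_subset_integral => //.
  - by apply/measurable_realfun.measurable_EFinP; exact: measurable_funTS mF.
  - by apply: subset_itvr; rewrite bnd_simp.
apply: (@le_trans _ _ (\int[lebesgue_measure]_(y in `[x, 1%R]) (c0%:E * (exponential_pdf k y)%:E))).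
  apply: ge0_le_integral => //.
  - by apply/measurable_realfun.measurable_EFinP; exact: measurable_funTS mF.
  - apply: measurable_funeM.
    by apply/measurable_realfun.measurable_EFinP; exact: measurable_funTS (measurable_exponential_pdf _).
  move=> y; rewrite /= in_itv /= => /andP[xy y1].
  rewrite -EFinM lee_fin exponential_pdfE; last lra.
  rewrite /c0 /=.
  have -> : (expR (- 2 * s * phi0 lambda theta x) * expR (k * x) / k * (k * expR (- k * y)) =
     expR (- 2 * s * phi0 lambda theta x + k * x + - k * y))%R.
    rewrite !expRD; field; exact: lt0r_neq0.
  rewrite ler_expR.
  have := @phi0_incr R lambda theta delta x y l0 d0 ax xy.
  rewrite /k => h.
  have : (2 * s * (2 * lambda * delta * (y - x)) <= 2 * s * (phi0 lambda theta y - phi0 lambda theta x))%R.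
    by apply: ler_wpM2l => //; lra.
  lra.
rewrite ge0_integralZl_EFin //; last 2 first.
  - by apply/measurable_realfun.measurable_EFinP; exact: measurable_funTS (measurable_exponential_pdf _).
  - by rewrite /c0; apply: divr_ge0; [rewrite mulr_ge0 // expR_ge0 | exact: ltW].
have -> : \int[lebesgue_measure]_(y in `[x, 1%R]) (exponential_pdf k y)%:E =
    (- expR (- k * 1))%R%:E - (- expR (- k * x))%R%:E.
  apply: (@continuous_FTC2 R (exponential_pdf k) (fun x => - expR (- k * x))%R x 1%R xlt).
  - apply: (@continuous_subspaceW R^o _ _ [set` `[0, +oo[%R]).
    + by apply: subset_itv; rewrite bnd_simp //; exact: ltW.
    + exact: within_continuous_exponential_pdf.
  - have cexpNM : continuous (fun z : R^o => expR (- k * z)).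
      move=> z; apply: continuous_comp; last exact: continuous_expR.
      by apply: continuousM => //; apply: (@continuousN _ R^o); exact: cst_continuous.
    split.
    + by move=> z _; exact: ex_derive.
    + by apply/cvg_at_right_filter; apply: cvgN; exact: cexpNM.
    + by apply/cvg_at_left_filter; apply: cvgN; exact: cexpNM.
  - move=> z; rewrite in_itv/= => /andP[xz _].
    by apply: derive1_exponential_pdf; rewrite in_itv/= andbT; lra.
rewrite -EFinB -EFinM lee_fin /c0.
have e1 : (0 <= expR (- k * 1))%R by exact: expR_ge0.
have -> : (expR (- 2 * s * phi0 lambda theta x) * expR (k * x) / k *
   (- expR (- k * 1) - - expR (- k * x)) =
   expR (- 2 * s * phi0 lambda theta x) / k - 
   expR (- 2 * s * phi0 lambda theta x) * expR (k * x) / k * expR (- k * 1))%R.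
  have -> : (expR (- k * x) = (expR (k * x))^-1)%R by rewrite mulNr expRN.
  field; apply/andP; split; [exact: lt0r_neq0 | exact: lt0r_neq0 (expR_gt0 _)].
rewrite gerBl; apply: mulr_ge0 => //.
by apply: divr_ge0; [rewrite mulr_ge0 // expR_ge0 | exact: ltW].
by move=> y _; rewrite lee_fin (exponential_pdf_ge0 (ltW k0)).
Qed.

Lemma le_integral_nm (R : realType) (D : set R) (f1 f2 : R -> \bar R) :
  (forall x, D x -> 0 <= f1 x) -> (forall x, D x -> f1 x <= f2 x) ->
  \int[@lebesgue_measure R]_(x in D) f1 x <= \int[@lebesgue_measure R]_(x in D) f2 x.
Proof.
move=> f10 f12.
have f20 : forall x, D x -> 0 <= f2 x by move=> x Dx; exact: le_trans (f10 x Dx) (f12 x Dx).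
rewrite !ge0_integralE//.
apply: ereal_sup_le => _ [h hf <-]; exists h => // x.
apply: le_trans (hf x) _.
rewrite /patch; case: ifP => // /set_mem Dx; exact: f12.
Qed.
Local Close Scope ereal_scope.

Theorem lemma4p12 (R : realType) (theta delta : R) :
  0 < theta < 1 -> 0 < delta -> theta + delta < 1 ->
  exists lambda0 : R, 0 < lambda0 /\
  forall lambda : R, lambda0 <= lambda ->
  exists s0 C : R, 0 < s0 /\ 0 < C /\
  forall s : R, s0 <= s ->
  forall f g : R -> R,
    H1_deriv (theta + delta) 1 f g -> f 1 = 0 ->
    (s%:E * \int[@lebesgue_measure R]_(x in `[(theta + delta)%R, 1%R])
        ((f x) ^+ 2 * expR (2 * s * phi0 lambda theta x))%R%:E
     <= C%:E * \int[@lebesgue_measure R]_(x in `[(theta + delta)%R, 1%R])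
        ((g x) ^+ 2 * expR (2 * s * phi0 lambda theta x))%R%:E)%E.
Proof.
move=> /andP[th0 th1] d0 td1.
exists 1; split => // lambda l1.
have l0 : 0 < lambda by lra.
have k00 : 0 < 2 * lambda * delta by apply: mulr_gt0 => //; apply: mulr_gt0.
exists 1, ((1 - (theta + delta)) / (2 * (2 * lambda * delta))); split => //; split.
  by apply: divr_gt0; [lra | apply: mulr_gt0].
move=> s s1 f g [mg ig ig2 fH] f1.
have s0 : 0 < s by lra.
set a := theta + delta.
have a1 : a < 1 by [].
have aa : theta + delta <= a by rewrite /a.
have maD : measurable `[a, 1] by [].
have mgw : measurable_fun `[a, 1] (fun y => g y ^+ 2 * expR (2 * s * phi0 lambda theta y)).
  apply: measurable_realfun.measurable_funM.
    exact: measurable_realfun.measurable_funX.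
  exact: measurable_funTS (measurable_w _ _ _ _).
set J := (\int[lebesgue_measure]_(x in `[a, 1%R])
        ((g x) ^+ 2 * expR (2 * s * phi0 lambda theta x))%R%:E)%E.
have J0 : (0 <= J)%E.
  apply: integral_ge0 => x _; rewrite lee_fin.
  by apply: mulr_ge0; [exact: sqr_ge0 | exact: expR_ge0].
have := leey J; rewrite le_eqVlt => /predU1P[Jy|Jlt].
  rewrite Jy gt0_muley ?leey //.
  by rewrite lte_fin; apply: divr_gt0; [lra | apply: mulr_gt0].
have Jfin : J = (fine J)%:E by rewrite fineK // ge0_fin_numE.
set I := fine J.
have I0 : 0 <= I by exact: fine_ge0.
have key : forall x, a <= x <= 1 ->
    f x ^+ 2 * expR (2 * s * phi0 lambda theta x) <= I / (2 * s * (2 * lambda * delta)).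
  move=> x /andP[ax x1].
  have mxD : `]x, 1%R] `<=` `[a, 1%R] by apply: subset_itv; rewrite bnd_simp.
  have igx : lebesgue_measure.-integrable `]x, 1%R] (EFin \o g).
    by apply: integrableS ig...
  have h1 : f x = f a + Rintegral lebesgue_measure `[a, x] g := fH x (introT andP (conj ax x1)).
  have h2 : f 1 = f a + Rintegral lebesgue_measure `[a, 1] g :=
    fH 1 (introT andP (conj (ltW a1) (lexx 1))).
  have h3 : Rintegral lebesgue_measure `[a, 1] g - Rintegral lebesgue_measure `[a, x] g =
      Rintegral lebesgue_measure `]x, 1] g.
    by apply: Rintegral_itvB => //; rewrite bnd_simp.
  have fx : f x = - Rintegral lebesgue_measure `]x, 1] g by lra.
  have fxE : (f x)%:E = (- (\int[lebesgue_measure]_(y in `]x, 1%R]) (g y)%:E))%E.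
    rewrite fx EFinN; congr (- _)%E; rewrite /Rintegral fineK //.
    exact: integrable_fin_num igx.
  have mgx : measurable_fun `]x, 1%R] (fun y => (g y)%:E) by exact: (measurable_int _ igx).
  have Efx : (`|f x|%:E <= \int[lebesgue_measure]_(y in `]x, 1%R]) `|(g y)%:E|)%E.
    by rewrite -abse_EFin fxE abseN; exact: le_abse_integral.
  set M := expR (- 2 * s * phi0 lambda theta x) / (2 * s * (2 * lambda * delta)).
  have M0 : 0 < M.
    by apply: divr_gt0; [exact: expR_gt0 | apply: mulr_gt0; [lra | ]].
  have HB := @Bbound R lambda theta delta s x l0 d0 s0 th0 ax x1.
  have He : forall e, 0 < e -> `|f x| <= e / 2 * I + 1 / (2 * e) * M.
    move=> e e0; rewrite -lee_fin; apply: le_trans Efx _.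
    have mF : measurable_fun `]x,1%R] (fun y => (expR (- 2 * s * phi0 lambda theta y))%:E).
      apply/measurable_realfun.measurable_EFinP.
      exact: measurable_funTS (@measurable_w R lambda theta (- 2 * s)).
    have mG : measurable_fun `]x,1%R] (fun y => (g y ^+ 2 * expR (2 * s * phi0 lambda theta y))%:E).
      apply/measurable_realfun.measurable_EFinP.
      exact: measurable_funS maD mxD mgw.
    apply: (@le_trans _ _ (\int[lebesgue_measure]_(y in `]x, 1%R])
       ((e / 2)%:E * (g y ^+ 2 * expR (2 * s * phi0 lambda theta y))%:E +
        (1 / (2 * e))%:E * (expR (- 2 * s * phi0 lambda theta y))%:E))%E).
      apply: ge0_le_integral => //.
      - by apply: measurableT_comp => //.
      - by apply: emeasurable_funD => //; apply: measurable_funeM.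
      - move=> y _; rewrite abse_EFin -!EFinM -EFinD lee_fin.
        apply: le_trans (@amgm R e _ (g y) e0 (expR_gt0 (2 * s * phi0 lambda theta y))) _.
        by rewrite -expRN !mulNr.
    rewrite ge0_integralD //; last 4 first.
    - move=> y _; rewrite -EFinM lee_fin; apply: mulr_ge0; first lra.
      by apply: mulr_ge0; [exact: sqr_ge0 | exact: expR_ge0].
    - by apply: measurable_funeM.
    - move=> y _; rewrite -EFinM lee_fin; apply: mulr_ge0; last exact: expR_ge0.
      by apply: divr_ge0; lra.
    - by apply: measurable_funeM.
    rewrite !ge0_integralZl_EFin //; first last.
    - by apply: divr_ge0; lra.
    - move=> y _; rewrite lee_fin.
      by apply: mulr_ge0; [exact: sqr_ge0 | exact: expR_ge0].
    - by apply: divr_ge0; lra.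
    rewrite EFinD !EFinM; apply: leeD; apply: lee_wpmul2l.
    - by rewrite lee_fin; apply: divr_ge0; lra.
    - rewrite -Jfin /J; apply: ge0_subset_integral => //.
      + by apply/measurable_EFinP.
      + move=> y _; rewrite lee_fin.
        by apply: mulr_ge0; [exact: sqr_ge0 | exact: expR_ge0].
    - by rewrite lee_fin; apply: divr_ge0; lra.
    - exact: HB.
  have hc := @cs_real R `|f x| I M (normr_ge0 (f x)) I0 M0 He.
  rewrite real_normK in hc; last exact: num_real.
  apply: le_trans (ler_wpM2r (expR_ge0 _) hc) _.
  have e1 : expR (- 2 * s * phi0 lambda theta x) * expR (2 * s * phi0 lambda theta x) = 1.
    by rewrite -expRD !mulNr addNr expR0.
  rewrite /M.
  have kne : 2 * s * (2 * lambda * delta) != 0.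
    by apply: lt0r_neq0; apply: mulr_gt0 => //; lra.
  have hh : forall u v w z : R, u * (v / w) * z = u * (v * z) / w by move=> u v w z; rewrite !mulrA mulrAC.
  by rewrite hh e1 mulr1.
set k := 2 * s * (2 * lambda * delta).
have k0 : 0 < k by apply: mulr_gt0 => //; lra.
have Hint : (\int[lebesgue_measure]_(x in `[a, 1%R])
        ((f x) ^+ 2 * expR (2 * s * phi0 lambda theta x))%R%:E <=
    \int[lebesgue_measure]_(x in `[a, 1%R]) (I / k)%:E)%E.
  apply: le_integral_nm => x; rewrite /= in_itv /= => /andP[ax x1].
    by rewrite lee_fin; apply: mulr_ge0; [exact: sqr_ge0 | exact: expR_ge0].
  by rewrite lee_fin; apply: key; rewrite ax x1.
have Hcst : (\int[lebesgue_measure]_(x in `[a, 1%R]) (I / k)%:E = ((I / k) * (1 - a))%:E)%E.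
  have mu1 : lebesgue_measure `[a, 1%R] = (1 - a)%:E.
    by rewrite lebesgue_measure_itv /= lte_fin a1 -EFinB.
  rewrite integral_cst //= mu1 -EFinM //.
apply: le_trans (lee_wpmul2l _ Hint) _.
  by rewrite lee_fin; lra.
rewrite Hcst Jfin -!EFinM lee_fin.
rewrite le_eqVlt; apply/orP; left; apply/eqP.
rewrite /k -/I; field.
by rewrite !lt0r_neq0.
Qed.
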